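(* Let $\Phi:\mathbb{R}\to\mathbb{R}$ be smooth, $\sigma\in\mathbb{R}$, and let $R,V\in C^1(\mathbb{R})\cap L^\infty(\mathbb{R})$ with $R(\varphi)\to r_\pm$ and $V(\varphi)\to v_\pm$ as $\varphi\to\pm\infty$ solve $$\sigma R'(\varphi)+V(\varphi+1)-V(\varphi)=0,\qquad \sigma V'(\varphi)+\Phi'(R(\varphi))-\Phi'(R(\varphi-1))=0\quad(\varphi\in\mathbb{R}).$$ Then $$\sigma[\![r]\!]+[\![v]\!]=0,\qquad \sigma[\![v]\!]+[\![\Phi'(r)]\!]=0,\qquad \sigma[\![\tfrac12 v^2+\Phi(r)]\!]+[\![\Phi'(r)v]\!]=0.$$
   Context: For an observable $\psi(r,v)$, $[\![\psi]\!]:=\psi(r_+,v_+)-\psi(r_-,v_-)$; e.g. $[\![r]\!]=r_+-r_-$, $[\![\Phi'(r)v]\!]=\Phi'(r_+)v_+-\Phi'(r_-)v_-$. *)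

(* Defs.v *)
From Stdlib Require Import Reals.
From Coquelicot Require Import Coquelicot.
Open Scope R_scope.

Definition smooth (f : R -> R) : Prop := forall (n : nat) (x : R), ex_derive_n f n x.

Definition is_C1 (f : R -> R) : Prop :=
  forall x : R, ex_derive f x /\ continuous (Derive f) x.

(* f in L^infty(R); for continuous f this is plain boundedness. *)
Definition bounded_fun (f : R -> R) : Prop := exists M : R, forall x : R, Rabs (f x) <= M.

(* Main.v *)
Require Import Defs.
From Stdlib Require Import Reals Lra.
From Coquelicot Require Import Coquelicot.
Open Scope R_scope.
Lemma prim_deriv (f : R -> R) : (forall x, continuous f x) ->
  forall x, is_derive (fun y => RInt f 0 y) x (f x).
Proof.
  intros Hc x. apply is_derive_RInt with (a := 0); [|apply Hc].
  apply filter_forall. intros b. apply RInt_correct.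
  apply ex_RInt_continuous. intros; apply Hc.
Qed.

Lemma W_eq (f : R -> R) : (forall x, continuous f x) ->
  forall x, RInt f 0 (x+1) - RInt f 0 x = RInt f x (x+1).
Proof.
  intros Hc x. rewrite <- (RInt_Chasles f 0 x (x+1)).
  - change (plus (RInt f 0 x) (RInt f x (x+1))) with (RInt f 0 x + RInt f x (x+1)). ring.
  - apply ex_RInt_continuous; intros; apply Hc.
  - apply ex_RInt_continuous; intros; apply Hc.
Qed.

Lemma W_bound (f : R -> R) (l e x : R) : (forall x, continuous f x) ->
  (forall t, x <= t <= x + 1 -> Rabs (f t - l) <= e) ->
  Rabs (RInt f x (x+1) - l) <= e.
Proof.
  intros Hc H.
  assert (E : RInt f x (x+1) - l = RInt (fun t => f t - l) x (x+1)).
  { assert (Hm := RInt_minus f (fun _ => l) x (x+1)).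
    rewrite RInt_const in Hm.
    change (minus ?a ?b) with (a - b) in Hm.
    change (scal ?a ?b) with (a * b) in Hm.
    unfold minus, plus, opp in Hm; simpl in Hm.
    replace (x + 1 - x) with 1 in Hm by ring.
    rewrite Hm. ring.
    apply ex_RInt_continuous; intros; apply Hc.
    apply ex_RInt_const. }
  rewrite E.
  replace e with ((x + 1 - x) * e) by ring.
  apply abs_RInt_le_const; [lra| |exact H].
  assert (Hc' : forall z, continuous (fun t => f t - l) z).
  { intros z. apply (continuous_minus f (fun _ => l)). apply Hc. apply continuous_const. }
  exact (ex_RInt_continuous (fun t => f t - l) x (x+1) (fun z _ => Hc' z)).
Qed.

Lemma W_lim (f : R -> R) (s : Rbar) (l : R) : (s = p_infty \/ s = m_infty) ->
  (forall x, continuous f x) -> is_lim f s l ->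
  is_lim (fun x => RInt f x (x+1)) s l.
Proof.
  intros Hs Hc Hl. apply is_lim_spec. apply is_lim_spec in Hl.
  intros eps.
  assert (He : 0 < eps/2) by (destruct eps; simpl; lra).
  specialize (Hl (mkposreal _ He)). simpl in Hl.
  destruct Hs as [-> | ->]; simpl in *; destruct Hl as [M HM].
  - exists M. intros x Hx. eapply Rle_lt_trans.
    apply W_bound; [exact Hc|]. intros t Ht. left. apply HM. lra.
    destruct eps; simpl; lra.
  - exists (M - 1). intros x Hx. eapply Rle_lt_trans.
    apply W_bound; [exact Hc|]. intros t Ht. left. apply HM. lra.
    destruct eps; simpl; lra.
Qed.

Lemma const_of_deriv0 (g : R -> R) : (forall x, is_derive g x 0) -> forall a b, g b = g a.
Proof.
  intros H a b.
  destruct (MVT_cor4 g (fun _ => 0) a (Rabs (b - a))) with (b := b) as [c [Hc _]].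
  intros; apply H. lra. lra.
Qed.

Lemma key (A f g : R -> R) (ap am lp lm : R) :
  (forall x, is_derive A x (g x)) -> (forall x, continuous f x) ->
  (forall x, g x + f (x+1) - f x = 0) ->
  is_lim A p_infty ap -> is_lim A m_infty am ->
  is_lim f p_infty lp -> is_lim f m_infty lm ->
  ap - am + (lp - lm) = 0.
Proof.
  intros HA Hc Hg Hap Ham Hlp Hlm.
  set (G := fun x => A x + (RInt f 0 (x+1) - RInt f 0 x)).
  assert (HG : forall x, is_derive G x 0).
  { intros x. unfold G.
    assert (Hs : is_derive (fun y => y + 1) x 1) by (auto_derive; [exact I | ring]).
    assert (H1 := is_derive_comp (fun y => RInt f 0 y) (fun y => y+1) x _ 1 (prim_deriv f Hc (x+1)) Hs).
    change (scal 1 ?a) with (1 * a) in H1; rewrite Rmult_1_l in H1.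
    assert (H2 := is_derive_plus _ _ x _ _ (HA x) (is_derive_minus _ _ x _ _ H1 (prim_deriv f Hc x))).
    assert (E : plus (g x) (minus (f (x+1)) (f x)) = 0).
    { change (g x + (f (x+1) + - f x) = 0). rewrite <- (Hg x). ring. }
    unfold G. eapply is_derive_ext; [|rewrite <- E; exact H2].
    intros t. simpl. reflexivity. }
  assert (HC := const_of_deriv0 G HG 0).
  assert (LG : forall s (l1 l2 : R), (s = p_infty \/ s = m_infty) -> is_lim A s l1 -> is_lim f s l2 ->
     G 0 = l1 + l2).
  { intros s l1 l2 Hs H1 H2.
    assert (L : is_lim G s (l1 + l2)).
    { apply is_lim_ext with (fun x => A x + RInt f x (x+1)).
      intros y. unfold G. rewrite (W_eq f Hc y). reflexivity.
      apply is_lim_plus'. exact H1. apply W_lim; auto. }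
    assert (L2 : is_lim G s (G 0)).
    { apply is_lim_ext with (fun _ => G 0). intros y. symmetry. apply HC. apply is_lim_const. }
    apply is_lim_unique in L. apply is_lim_unique in L2. rewrite L in L2.
    injection L2. auto. }
  assert (E1 := LG p_infty ap lp (or_introl eq_refl) Hap Hlp).
  assert (E2 := LG m_infty am lm (or_intror eq_refl) Ham Hlm).
  lra.
Qed.

Lemma lim_mult' (f g : R -> R) (s : Rbar) (a b : R) :
  is_lim f s a -> is_lim g s b -> is_lim (fun y => f y * g y) s (a * b).
Proof.
  intros H1 H2. assert (H := is_lim_mult f g s a b H1 H2 I). exact H.
Qed.

Lemma lim_scal' (f : R -> R) (s : Rbar) (k a : R) :
  is_lim f s a -> is_lim (fun y => k * f y) s (k * a).
Proof.
  intros H1. assert (H := is_lim_scal_l f k s a H1). exact H.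
Qed.

Lemma lim_cont (h u : R -> R) (s : Rbar) (l : R) :
  continuous h l -> is_lim u s l -> is_lim (fun x => h (u x)) s (h l).
Proof.
  intros Hh Hu. unfold is_lim. eapply filterlim_comp. exact Hu. exact Hh.
Qed.

Lemma lim_shift (u : R -> R) (s : Rbar) (l : R) : (s = p_infty \/ s = m_infty) ->
  is_lim u s l -> is_lim (fun x => u (x - 1)) s l.
Proof.
  intros Hs Hu. unfold is_lim. eapply filterlim_comp; [|exact Hu].
  destruct Hs as [-> | ->]; intros P [M HM].
  - exists (M + 1). intros x Hx. apply HM. lra.
  - exists (M + 1). intros x Hx. apply HM. lra.
Qed.

Theorem lemma2p1
  (Phi : R -> R) (sigma : R) (Rf Vf : R -> R) (rm rp vm vp : R)
  (HPhi : smooth Phi)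
  (HR1 : is_C1 Rf) (HRb : bounded_fun Rf) (HV1 : is_C1 Vf) (HVb : bounded_fun Vf)
  (HRp : is_lim Rf p_infty rp) (HRm : is_lim Rf m_infty rm)
  (HVp : is_lim Vf p_infty vp) (HVm : is_lim Vf m_infty vm)
  (Heq1 : forall phi : R, sigma * Derive Rf phi + Vf (phi + 1) - Vf phi = 0)
  (Heq2 : forall phi : R,
      sigma * Derive Vf phi + Derive Phi (Rf phi) - Derive Phi (Rf (phi - 1)) = 0) :
  sigma * (rp - rm) + (vp - vm) = 0 /\
  sigma * (vp - vm) + (Derive Phi rp - Derive Phi rm) = 0 /\
  sigma * ((/2 * vp ^ 2 + Phi rp) - (/2 * vm ^ 2 + Phi rm))
    + (Derive Phi rp * vp - Derive Phi rm * vm) = 0.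
Proof.
  assert (exR : forall x, ex_derive Rf x) by (intro x; apply HR1).
  assert (exV : forall x, ex_derive Vf x) by (intro x; apply HV1).
  assert (exP : forall x, ex_derive Phi x) by (intro x; apply (HPhi 1%nat x)).
  assert (exD : forall x, ex_derive (Derive Phi) x) by (intro x; apply (HPhi 2%nat x)).
  assert (cV : forall x, continuous Vf x) by (intro x; exact (ex_derive_continuous Vf x (exV x))).
  assert (cR : forall x, continuous Rf x) by (intro x; exact (ex_derive_continuous Rf x (exR x))).
  assert (cP : forall x, continuous Phi x) by (intro x; exact (ex_derive_continuous Phi x (exP x))).
  assert (cD : forall x, continuous (Derive Phi) x) by (intro x; exact (ex_derive_continuous (Derive Phi) x (exD x))).
  set (D := Derive Phi) in *.
  assert (Hs1 : p_infty = p_infty \/ p_infty = m_infty) by auto.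
  assert (Hs2 : m_infty = p_infty \/ m_infty = m_infty) by auto.
  assert (cF : forall x, continuous (fun t => D (Rf (t - 1))) x).
  { intro x. apply (continuous_comp (fun t => Rf (t - 1)) D).
    apply (continuous_comp (fun t => t - 1) Rf).
    apply (continuous_minus (fun t => t) (fun _ => 1)). apply continuous_id. apply continuous_const.
    apply cR. apply cD. }
  split; [|split].
  - assert (K := key (fun x => sigma * Rf x) Vf (fun x => sigma * Derive Rf x) (sigma * rp) (sigma * rm) vp vm).
    assert (sigma * rp - sigma * rm + (vp - vm) = 0).
    { apply K.
      - intro x. apply is_derive_scal. apply Derive_correct, exR.
      - exact cV.
      - intro x. rewrite <- (Heq1 x). ring.
      - apply lim_scal', HRp.
      - apply lim_scal', HRm.
      - exact HVp.
      - exact HVm. }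
    lra.
  - assert (K := key (fun x => sigma * Vf x) (fun t => D (Rf (t - 1))) (fun x => sigma * Derive Vf x) (sigma * vp) (sigma * vm) (D rp) (D rm)).
    assert (sigma * vp - sigma * vm + (D rp - D rm) = 0).
    { apply K.
      - intro x. apply is_derive_scal. apply Derive_correct, exV.
      - exact cF.
      - intro x. replace (x + 1 - 1) with x by ring. rewrite <- (Heq2 x). ring.
      - apply lim_scal', HVp.
      - apply lim_scal', HVm.
      - apply lim_cont with (u := fun t => Rf (t - 1)); auto. apply lim_shift; auto.
      - apply lim_cont with (u := fun t => Rf (t - 1)); auto. apply lim_shift; auto. }
    lra.
  - set (E := fun v r => sigma * (/2 * v ^ 2 + Phi r)).
    assert (LE : forall s (v r : R), is_lim Vf s v -> is_lim Rf s r ->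
                 is_lim (fun x => E (Vf x) (Rf x)) s (E v r)).
    { intros s v r H1 H2. unfold E. apply lim_scal'. apply is_lim_plus'.
      apply lim_scal'. simpl.
      apply (is_lim_ext (fun x => Vf x * (Vf x * 1))). intro; ring.
      apply lim_mult'. exact H1. apply lim_mult'. exact H1. apply is_lim_const.
      apply lim_cont; auto. }
    assert (K := key (fun x => E (Vf x) (Rf x)) (fun t => D (Rf (t - 1)) * Vf t)
       (fun x => sigma * (Vf x * Derive Vf x + D (Rf x) * Derive Rf x))
       (E vp rp) (E vm rm) (D rp * vp) (D rm * vm)).
    assert (E vp rp - E vm rm + (D rp * vp - D rm * vm) = 0).
    { apply K.
      - intro x. unfold E. auto_derive.
        + repeat split; auto.
        + change (fun x0 : R => Vf x0) with Vf. change (fun x0 : R => Rf x0) with Rf.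
          change (fun x0 : R => Phi x0) with Phi. unfold D. field.
      - intro x. apply (continuous_mult (fun t => D (Rf (t - 1))) Vf). apply cF. apply cV.
      - intro x. replace (x + 1 - 1) with x by ring.
        assert (E1 := Heq1 x). assert (E2 := Heq2 x). fold D in E2.
        replace (sigma * (Vf x * Derive Vf x + D (Rf x) * Derive Rf x))
          with (Vf x * (sigma * Derive Vf x) + D (Rf x) * (sigma * Derive Rf x)) by ring.
        replace (sigma * Derive Vf x) with (D (Rf (x - 1)) - D (Rf x)) by lra.
        replace (sigma * Derive Rf x) with (Vf x - Vf (x + 1)) by lra.
        ring.
      - apply LE; auto.
      - apply LE; auto.
      - apply lim_mult'; auto. apply lim_cont with (u := fun t => Rf (t - 1)); auto. apply lim_shift; auto.
      - apply lim_mult'; auto. apply lim_cont with (u := fun t => Rf (t - 1)); auto. apply lim_shift; auto. }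
    unfold E in *. lra.
Qed.
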